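(* Let $\gamma=(\gamma_1,\gamma_2)\ge(0,0)$ and $\varkappa\ge0$ with $\gamma_2\ge\varkappa$. If $A\in\mathcal M_{\gamma,0}$ and $B\in\mathcal M_{\gamma,\varkappa}$, then the matrix products $AB$ and $BA$ (defined by $(AB)_a^b=\sum_{c\in\mathcal L}A_a^cB_c^b$) exist (the defining series converge absolutely), belong to $\mathcal M_{\gamma,\varkappa}$, and $$|AB|_{\gamma,\varkappa}\le|A|_{\gamma,0}|B|_{\gamma,\varkappa},\qquad |BA|_{\gamma,\varkappa}\le|A|_{\gamma,0}|B|_{\gamma,\varkappa}.$$
   Context: Let $d_*\ge1$ and let $\mathcal L\subset\mathbb Z^{d_*}$. For $a\in\mathbb Z^{d_*}$, $\langle a\rangle=\max(|a|,1)$, and $[a-b]=\min(|a-b|,|a+b|)$. For $\gamma=(\gamma_1,\gamma_2)$ and $\varkappa\ge0$ let $e_{\gamma,\varkappa}(a,b)=C\,e^{\gamma_1[a-b]}\max([a-b],1)^{\gamma_2}\min(\langle a\rangle,\langle b\rangle)^{\varkappa}$, where $C\ge1$ is a fixed constant, taken sufficiently large depending only on $\gamma_2$ and $\varkappa$ (standing assumption). For a matrix $A=(A_a^b)_{a,b\in\mathcal L}$ whose entries $A_a^b$ are complex $2\times2$ matrices, let $$|A|_{\gamma,\varkappa}=\max\Big\{\sup_a\sum_b\|A_a^b\|\,e_{\gamma,\varkappa}(a,b),\ \sup_b\sum_a\|A_a^b\|\,e_{\gamma,\varkappa}(a,b)\Big\},$$ $\|\cdot\|$ being the operator norm of $2\times2$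 matrices, and let $\mathcal M_{\gamma,\varkappa}$ be the space of such matrices with $|A|_{\gamma,\varkappa}<\infty$. *)

(* Defs.v *)
From HB Require Import structures.
From mathcomp Require Import all_boot all_order all_algebra.
From mathcomp Require Import all_classical all_reals all_analysis.
From mathcomp Require Import complex.
Set Implicit Arguments. Unset Strict Implicit. Unset Printing Implicit Defensive.
Import Order.TTheory GRing.Theory Num.Theory.
Local Open Scope classical_set_scope.
Local Open Scope ring_scope.

Section Defs.
Variable R : realType.
Variable d : nat.

Definition Zd := 'rV[int]_d.

Definition zabs (a : Zd) : R := Num.sqrt (\sum_(i < d) ((a ord0 i)%:~R : R) ^+ 2).

Definition zang (a : Zd) : R := Num.max (zabs a) 1.

Definition zbr (a b : Zd) : R := Num.min (zabs (a - b)) (zabs (a + b)).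

Definition ewt (C g1 g2 kap : R) (a b : Zd) : R :=
  C * expR (g1 * zbr a b) * (Num.max (zbr a b) 1) `^ g2
    * (Num.min (zang a) (zang b)) `^ kap.

Definition cvnorm (v : 'cV[R[i]]_2) : R :=
  Num.sqrt (\sum_(i < 2) (complex.Re (v i ord0) ^+ 2 + complex.Im (v i ord0) ^+ 2)).

Definition opnorm (M : 'M[R[i]]_2) : R :=
  sup [set cvnorm (M *m v) | v in [set v : 'cV[R[i]]_2 | cvnorm v <= 1]].

(* a matrix indexed by L x L with 2x2 complex blocks; only entries in L matter *)
Definition blockmx := Zd -> Zd -> 'M[R[i]]_2.

Definition mnorm (C g1 g2 kap : R) (L : set Zd) (A : blockmx) : \bar R :=
  Order.max (Order.max 0%E
    (ereal_sup [set (\esum_(b in L) (opnorm (A a b) * ewt C g1 g2 kap a b)%:E)%E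
               | a in L]))
    (ereal_sup [set (\esum_(a in L) (opnorm (A a b) * ewt C g1 g2 kap a b)%:E)%E
               | b in L]).

Definition abs_summable (L : set Zd) (F : Zd -> 'M[R[i]]_2) : Prop :=
  (\esum_(c in L) (opnorm (F c))%:E < +oo)%E.

Definition rsum (L : set Zd) (f : Zd -> R) : R :=
  fine (\esum_(c in L) ((Num.max (f c) 0)%:E))%E
  - fine (\esum_(c in L) ((Num.max (- f c) 0)%:E))%E.

Definition msum (L : set Zd) (F : Zd -> 'M[R[i]]_2) : 'M[R[i]]_2 :=
  \matrix_(i, j) ((rsum L (fun c => complex.Re (F c i j)))
                   +i* (rsum L (fun c => complex.Im (F c i j))))%C.

Definition mprod (L : set Zd) (A B : blockmx) : blockmx :=
  fun a b => msum L (fun c => A a c *m B c b).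

End Defs.

(* Main.v *)
Require Import Defs.
From HB Require Import structures.
From mathcomp Require Import all_boot all_order all_algebra.
From mathcomp Require Import all_classical all_reals all_analysis.
From mathcomp Require Import complex.
From mathcomp Require Import ring lra.
Import Order.TTheory GRing.Theory Num.Theory.
Local Open Scope classical_set_scope.
Local Open Scope ring_scope.
Set Implicit Arguments. Unset Strict Implicit. Unset Printing Implicit Defensive.

Section S_T1.
Variable R : realType.
Definition pc (z : R[i]) : R := `|complex.Re z| + `|complex.Im z|.

Lemma pc_ge0 z : 0 <= pc z.
Proof. by rewrite /pc addr_ge0. Qed.

Lemma pcD x y : pc (x + y) <= pc x + pc y.
Proof.
case: x => a b; case: y => c e; rewrite /pc /=.
have := ler_normD a c; have := ler_normD b e; lra.
Qed.

Lemma pcM x y : pc (x * y) <= pc x * pc y.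
Proof.
case: x => a b; case: y => c e; rewrite /pc /=.
have h1 := ler_normB (a*c) (b*e).
have h2 := ler_normD (a*e) (b*c).
rewrite !normrM in h1 h2.
have := normr_ge0 a; have := normr_ge0 b; have := normr_ge0 c; have := normr_ge0 e.
nra.
Qed.

Lemma pc_sum (I : finType) (F : I -> R[i]) : pc (\sum_i F i) <= \sum_i pc (F i).
Proof.
elim/big_ind2: _ => //.
  by rewrite /pc /= normr0 addr0.
by move=> x1 x2 y1 y2 h1 h2; apply: le_trans (pcD _ _) _; apply: lerD.
Qed.
End S_T1.

Section S_T2.
Variable R : realType.
Implicit Types (v w : 'cV[R[i]]_2) (M N : 'M[R[i]]_2).
Definition smx (M : 'M[R[i]]_2) : R := \sum_i \sum_j pc (M i j).

Lemma smx_ge0 M : 0 <= smx M.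
Proof. by apply: sumr_ge0 => i _; apply: sumr_ge0 => j _; apply: pc_ge0. Qed.

Lemma sum2 (V : nmodType) (F : 'I_2 -> V) : \sum_i F i = F 0 + F 1.
Proof.
rewrite !big_ord_recl big_ord0 addr0.
by have -> : lift ord0 ord0 = 1 :> 'I_2 by apply: val_inj.
Qed.

Lemma ord2P (i : 'I_2) : i = 0 \/ i = 1.
Proof. by case: i => -[|[|]] //= ? ; [left|right]; apply: val_inj. Qed.

Lemma cvnormE (v : 'cV[R[i]]_2) : cvnorm v =
  Num.sqrt (complex.Re (v 0 0) ^+ 2 + complex.Im (v 0 0) ^+ 2 + (complex.Re (v 1 0) ^+ 2 + complex.Im (v 1 0) ^+ 2)).
Proof. by rewrite /cvnorm sum2. Qed.

Lemma cvnorm_ge0 v : 0 <= cvnorm v.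
Proof. exact: sqrtr_ge0. Qed.

Lemma sqrt4_le (x0 y0 x1 y1 : R) :
  Num.sqrt (x0 ^+ 2 + y0 ^+ 2 + (x1 ^+ 2 + y1 ^+ 2)) <= `|x0| + `|y0| + (`|x1| + `|y1|).
Proof.
rewrite -(ger0_norm (_ : 0 <= `|x0| + `|y0| + (`|x1| + `|y1|))); last first.
  by rewrite !addr_ge0.
rewrite -sqrtr_sqr; apply: ler_wsqrtr.
rewrite -[x0 ^+ 2]real_normK ?num_real // -[y0 ^+ 2]real_normK ?num_real //.
rewrite -[x1 ^+ 2]real_normK ?num_real // -[y1 ^+ 2]real_normK ?num_real //.
have := normr_ge0 x0; have := normr_ge0 y0; have := normr_ge0 x1; have := normr_ge0 y1.
nra.
Qed.

Lemma cvnorm_le v : cvnorm v <= pc (v 0 0) + pc (v 1 0).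
Proof. by rewrite cvnormE /pc; apply: sqrt4_le. Qed.

Lemma abs_le_sqrt (t S : R) : t ^+ 2 <= S -> `|t| <= Num.sqrt S.
Proof. by move=> h; rewrite -sqrtr_sqr; apply: ler_wsqrtr. Qed.

Lemma pc_le_cvnorm v i : pc (v i 0) <= 2 * cvnorm v.
Proof.
rewrite cvnormE /pc.
have := sqr_ge0 (complex.Re (v 0 0)); have := sqr_ge0 (complex.Im (v 0 0)).
have := sqr_ge0 (complex.Re (v 1 0)); have := sqr_ge0 (complex.Im (v 1 0)).
move=> h1 h2 h3 h4.
have [->|->] := ord2P i.
- have := @abs_le_sqrt (complex.Re (v 0 0)) (complex.Re (v 0 0) ^+ 2 + complex.Im (v 0 0) ^+ 2 + (complex.Re (v 1 0) ^+ 2 + complex.Im (v 1 0) ^+ 2)).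
  have := @abs_le_sqrt (complex.Im (v 0 0)) (complex.Re (v 0 0) ^+ 2 + complex.Im (v 0 0) ^+ 2 + (complex.Re (v 1 0) ^+ 2 + complex.Im (v 1 0) ^+ 2)).
  move=> /(_ ltac:(lra)) + /(_ ltac:(lra)); lra.
- have := @abs_le_sqrt (complex.Re (v 1 0)) (complex.Re (v 0 0) ^+ 2 + complex.Im (v 0 0) ^+ 2 + (complex.Re (v 1 0) ^+ 2 + complex.Im (v 1 0) ^+ 2)).
  have := @abs_le_sqrt (complex.Im (v 1 0)) (complex.Re (v 0 0) ^+ 2 + complex.Im (v 0 0) ^+ 2 + (complex.Re (v 1 0) ^+ 2 + complex.Im (v 1 0) ^+ 2)).
  move=> /(_ ltac:(lra)) + /(_ ltac:(lra)); lra.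
Qed.

Lemma pc_sum2 (F : 'I_2 -> R[i]) : pc (\sum_j F j) <= \sum_j pc (F j).
Proof. exact: pc_sum. Qed.

Lemma cvnorm_mul M v : cvnorm (M *m v) <= 2 * smx M * cvnorm v.
Proof.
apply: le_trans (cvnorm_le _) _.
rewrite -(sum2 (fun i => pc ((M *m v) i 0))) mulrAC mulrC /smx mulr_suml.
apply: ler_sum => i _; rewrite mxE mulr_suml.
apply: le_trans (pc_sum2 _) _; apply: ler_sum => j _.
apply: le_trans (pcM _ _) _.
apply: ler_wpM2l; first exact: pc_ge0.
exact: pc_le_cvnorm.
Qed.

Definition opS M := [set cvnorm (M *m v) | v in [set v | cvnorm v <= 1]].

Lemma cvnorm0 : cvnorm (0 : 'cV[R[i]]_2) = 0.
Proof. by rewrite cvnormE !mxE /= expr0n /= !addr0 sqrtr0. Qed.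

Lemma opS_ne M : opS M !=set0.
Proof. by exists (cvnorm (M *m 0)); exists 0 => //=; rewrite cvnorm0. Qed.

Lemma opS_ub M : ubound (opS M) (2 * smx M).
Proof.
move=> _ [v /= hv <-]; apply: le_trans (cvnorm_mul _ _) _.
rewrite -[leRHS]mulr1; apply: ler_wpM2l => //.
by rewrite mulr_ge0 // smx_ge0.
Qed.

Lemma opnorm_le M : opnorm M <= 2 * smx M.
Proof. by apply: ge_sup; [apply: opS_ne | apply: opS_ub]. Qed.

Lemma opnorm_ge M v : cvnorm v <= 1 -> cvnorm (M *m v) <= opnorm M.
Proof.
move=> hv; apply: (ub_le_sup (E := opS M)); last by exists v.
by exists (2 * smx M); apply: opS_ub.
Qed.

Lemma opnorm_ge0 M : 0 <= opnorm M.
Proof.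
apply: le_trans (opnorm_ge M (v := 0) _); first exact: cvnorm_ge0.
by rewrite cvnorm0.
Qed.

Definition ecol (j : 'I_2) : 'cV[R[i]]_2 := \col_k (if k == j then 1 else 0).

Lemma ecol_norm j : cvnorm (ecol j) <= 1.
Proof.
rewrite cvnormE !mxE.
by have [->|->] := ord2P j; rewrite /= expr0n /= expr1n !addr0 ?add0r sqrtr1.
Qed.

Lemma mul_ecol M i j : (M *m ecol j) i 0 = M i j.
Proof.
rewrite mxE sum2 !mxE.
by have [->|->] := ord2P j; rewrite /= mulr1 mulr0 ?addr0 ?add0r.
Qed.

Lemma pc_le_opnorm M i j : pc (M i j) <= 2 * opnorm M.
Proof.
rewrite -mul_ecol; apply: le_trans (pc_le_cvnorm _ _) _.
by apply: ler_wpM2l => //; apply: opnorm_ge; apply: ecol_norm.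
Qed.

Lemma smx_le M : smx M <= 8 * opnorm M.
Proof.
rewrite /smx !sum2.
have := pc_le_opnorm M 0 0; have := pc_le_opnorm M 0 1.
have := pc_le_opnorm M 1 0; have := pc_le_opnorm M 1 1; lra.
Qed.

Lemma smxM M N : smx (M *m N) <= smx M * smx N.
Proof.
rewrite /smx !sum2 !mxE !sum2.
have h : forall a b c e : R[i], pc (a * b + c * e) <= pc a * pc b + pc c * pc e.
  by move=> a b c e; apply: le_trans (pcD _ _) (lerD (pcM _ _) (pcM _ _)).
have := h (M 0 0) (N 0 0) (M 0 1) (N 1 0).
have := h (M 0 0) (N 0 1) (M 0 1) (N 1 1).
have := h (M 1 0) (N 0 0) (M 1 1) (N 1 0).
have := h (M 1 0) (N 0 1) (M 1 1) (N 1 1).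
have := pc_ge0 (M 0 0); have := pc_ge0 (M 0 1); have := pc_ge0 (M 1 0); have := pc_ge0 (M 1 1).
have := pc_ge0 (N 0 0); have := pc_ge0 (N 0 1); have := pc_ge0 (N 1 0); have := pc_ge0 (N 1 1).
nra.
Qed.

End S_T2.

Section S_T3.
Variable R : realType.
Implicit Types (M N : 'M[R[i]]_2).

Lemma esumZ (T : choiceType) (S : set T) (a : T -> \bar R) (k : R) :
  0 <= k -> (forall i, (0 <= a i)%E) ->
  (\esum_(i in S) (k%:E * a i) = k%:E * \esum_(i in S) a i)%E.
Proof.
move=> k0 a0; rewrite /esum -ereal_supZl //; last first.
  apply/set0P; exists (\sum_(i \in set0) a i)%E; exists set0 => //.
  exact: fsets_set0.
congr ereal_sup; apply/seteqP; split=> x /=.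
  by move=> [A hA <-]; exists (\sum_(i \in A) a i)%E; [exists A|rewrite ge0_mule_fsumr].
by move=> [_ [A hA <-] <-]; exists A => //; rewrite ge0_mule_fsumr.
Qed.

Lemma ereal_bound (x : \bar R) (e : R) : (0 <= x)%E -> (x <= e%:E)%E ->
  0 <= fine x <= e.
Proof.
case: x => //= r; rewrite !lee_fin => -> -> //.
Qed.

Lemma rsum_bound d (L : set (Zd d)) (f g : Zd d -> R) (e : R) :
  (forall c, `|f c| <= g c) ->
  (\esum_(c in L) (g c)%:E <= e%:E)%E -> `|rsum L f| <= 2 * e.
Proof.
move=> fg he; rewrite /rsum.
have h : forall h : Zd d -> R, (forall c, 0 <= h c <= g c) ->
    0 <= fine (\esum_(c in L) (h c)%:E)%E <= e.
  move=> h hh; apply: ereal_bound.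
    by apply: esum_ge0 => c _; rewrite lee_fin; case/andP: (hh c).
  apply: le_trans he; apply: le_esum => c _; rewrite lee_fin.
  by case/andP: (hh c).
have hp : forall c, 0 <= Num.max (f c) 0 <= g c.
  move=> c; rewrite le_max lexx orbT /= ge_max.
  have := fg c; have := ler_norm (f c); have := normr_ge0 (f c).
  move=> ? ? ?; apply/andP; split; lra.
have hn : forall c, 0 <= Num.max (- f c) 0 <= g c.
  move=> c; rewrite le_max lexx orbT /= ge_max.
  have := fg c; have := ler_norm (- f c); rewrite normrN; have := normr_ge0 (f c).
  move=> ? ? ?; apply/andP; split; lra.
have /andP[h1 h2] := h _ hp.
have /andP[h3 h4] := h _ hn.
rewrite ler_norml; apply/andP; split; lra.
Qed.
Lemma pc_le_smx M i j : pc (M i j) <= smx M.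
Proof.
rewrite /smx !sum2.
have := pc_ge0 (M 0 0); have := pc_ge0 (M 0 1); have := pc_ge0 (M 1 0); have := pc_ge0 (M 1 1).
by have [->|->] := ord2P i; have [->|->] := ord2P j; lra.
Qed.

Lemma smx_msum d (L : set (Zd d)) (F : Zd d -> 'M[R[i]]_2) (e : R) :
  (\esum_(c in L) (smx (F c))%:E <= e%:E)%E -> smx (Defs.msum L F) <= 16 * e.
Proof.
move=> he.
have hpc : forall i j, pc (Defs.msum L F i j) <= 4 * e.
  move=> i j; rewrite /Defs.msum mxE /pc /=.
  have h1 : `|rsum L (fun c => complex.Re (F c i j))| <= 2 * e.
    apply: rsum_bound he => c; apply: le_trans (pc_le_smx _ i j).
    by rewrite /pc lerDl normr_ge0.
  have h2 : `|rsum L (fun c => complex.Im (F c i j))| <= 2 * e.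
    apply: rsum_bound he => c; apply: le_trans (pc_le_smx _ i j).
    by rewrite /pc lerDr normr_ge0.
  lra.
rewrite /smx !sum2.
have := hpc 0 0; have := hpc 0 1; have := hpc 1 0; have := hpc 1 1; lra.
Qed.

Lemma opnorm_msum d (L : set (Zd d)) (F : Zd d -> 'M[R[i]]_2) :
  ((opnorm (Defs.msum L F))%:E <= 32%:E * \esum_(c in L) (smx (F c))%:E)%E.
Proof.
have h0 : (0 <= \esum_(c in L) (smx (F c))%:E)%E.
  by apply: esum_ge0 => c _; rewrite lee_fin smx_ge0.
move: h0 (@smx_msum d L F); case: (\esum_(c in L) _)%E => //= [e|] h0 hs.
  have := hs e (lexx _); rewrite -EFinM lee_fin => h.
  by apply: le_trans (opnorm_le _) _; lra.
by rewrite mulry gtr0_sg // mul1e leey.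
Qed.
End S_T3.

Section S_T4.
Variable R : realType.

Lemma sumsum_mul (I : finType) (f g : I -> R) :
  \sum_i \sum_j f i * g j = (\sum_i f i) * (\sum_j g j).
Proof. by rewrite mulr_suml; apply: eq_bigr => i _; rewrite mulr_sumr. Qed.

Lemma cauchy_schwarz (I : finType) (u v : I -> R) :
  (\sum_i u i * v i) ^+ 2 <= (\sum_i u i ^+ 2) * (\sum_i v i ^+ 2).
Proof.
have h0 : 0 <= \sum_i \sum_j (u i * v j - u j * v i) ^+ 2.
  by apply: sumr_ge0 => i _; apply: sumr_ge0 => j _; apply: sqr_ge0.
have e : \sum_i \sum_j (u i * v j - u j * v i) ^+ 2 =
   \sum_i \sum_j (u i ^+ 2 * v j ^+ 2) + \sum_i \sum_j (v i ^+ 2 * u j ^+ 2)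
   - 2 * \sum_i \sum_j ((u i * v i) * (u j * v j)).
  rewrite mulr_sumr -!big_split -sumrB /=; apply: eq_bigr => i _.
  rewrite mulr_sumr -!big_split -sumrB /=; apply: eq_bigr => j _.
  ring.
rewrite e !sumsum_mul in h0.
rewrite expr2; lra.
Qed.

Lemma minkowski (I : finType) (u v : I -> R) :
  Num.sqrt (\sum_i (u i + v i) ^+ 2) <=
  Num.sqrt (\sum_i u i ^+ 2) + Num.sqrt (\sum_i v i ^+ 2).
Proof.
set A := \sum_i u i ^+ 2; set B := \sum_i v i ^+ 2.
have A0 : 0 <= A by apply: sumr_ge0 => i _; apply: sqr_ge0.
have B0 : 0 <= B by apply: sumr_ge0 => i _; apply: sqr_ge0.
have e : \sum_i (u i + v i) ^+ 2 = A + B + 2 * \sum_i u i * v i.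
  rewrite /A /B mulr_sumr -!big_split /=; apply: eq_bigr => i _; ring.
have cs : \sum_i u i * v i <= Num.sqrt A * Num.sqrt B.
  rewrite -sqrtrM //; apply: le_trans (ler_norm _) _.
  by rewrite -sqrtr_sqr; apply: ler_wsqrtr; apply: cauchy_schwarz.
rewrite e -(ger0_norm (_ : 0 <= Num.sqrt A + Num.sqrt B)); last by rewrite addr_ge0.
rewrite -sqrtr_sqr; apply: ler_wsqrtr.
have := sqr_sqrtr A0; have := sqr_sqrtr B0.
rewrite !expr2 => h1 h2; lra.
Qed.

Variable d : nat.
Implicit Types a b c : Zd d.

Lemma zabsD a b : zabs R (a + b) <= zabs R a + zabs R b.
Proof.
rewrite /zabs; apply: le_trans (minkowski _ _).
by rewrite le_eqVlt; apply/orP; left; apply/eqP; congr Num.sqrt;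
  apply: eq_bigr => i _; rewrite mxE intrD.
Qed.

Lemma zabsN a : zabs R (- a) = zabs R a.
Proof.
by rewrite /zabs; congr Num.sqrt; apply: eq_bigr => i _; rewrite mxE intrN sqrrN.
Qed.

Lemma zabs_ge0 a : 0 <= zabs R a.
Proof. exact: sqrtr_ge0. Qed.

Lemma zabsB a b : zabs R (a - b) <= zabs R a + zabs R b.
Proof. by rewrite -(zabsN b); apply: zabsD. Qed.

Lemma zbr_sym a b : zbr R a b = zbr R b a.
Proof.
rewrite /zbr; congr Num.min; last by rewrite addrC.
by rewrite -zabsN opprB.
Qed.

Lemma zbr_ge0 a b : 0 <= zbr R a b.
Proof. by rewrite /zbr le_min !zabs_ge0. Qed.

Lemma zbr_cases a b : zbr R a b = zabs R (a - b) \/ zbr R a b = zabs R (a + b).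
Proof. by rewrite /zbr minEle; case: ifP; [left|right]. Qed.

Lemma zbr_le1 a b : zbr R a b <= zabs R (a - b).
Proof. by rewrite /zbr ge_min lexx. Qed.

Lemma zbr_le2 a b : zbr R a b <= zabs R (a + b).
Proof. by rewrite /zbr ge_min lexx orbT. Qed.

Lemma zbr_tri a b c : zbr R a b <= zbr R a c + zbr R c b.
Proof.
have [->|->] := zbr_cases a c; have [->|->] := zbr_cases c b.
- apply: le_trans (zbr_le1 _ _) _.
  have -> : a - b = (a - c) + (c - b) by rewrite addrA subrK.
  exact: zabsD.
- apply: le_trans (zbr_le2 _ _) _.
  have -> : a + b = (a - c) + (c + b) by rewrite addrA subrK.
  exact: zabsD.
- apply: le_trans (zbr_le2 _ _) _.
  have -> : a + b = (a + c) - (c - b) by rewrite opprB addrA addrAC addrK.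
  exact: zabsB.
- apply: le_trans (zbr_le1 _ _) _.
  have -> : a - b = (a + c) - (c + b) by rewrite opprD addrA addrK.
  exact: zabsB.
Qed.

Definition Mx (t : R) := Num.max t 1.

Lemma Mx_ge1 t : 1 <= Mx t.
Proof. by rewrite /Mx le_max lexx orbT. Qed.

Lemma Mx_ge t : t <= Mx t.
Proof. by rewrite /Mx le_max lexx. Qed.

Lemma zang_ge1 a : 1 <= zang R a.
Proof. by rewrite /zang le_max lexx orbT. Qed.

Lemma zabs_le a c : zabs R a <= zabs R c + zbr R a c.
Proof.
have [->|->] := zbr_cases a c.
  have {1}-> : a = c + (a - c) by rewrite addrC subrK.
  exact: zabsD.
have {1}-> : a = (a + c) - c by rewrite addrK.
by apply: le_trans (zabsB _ _) _; rewrite addrC.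
Qed.

Lemma zang_le a c : zang R a <= 2 * zang R c * Mx (zbr R a c).
Proof.
have h1 := zabs_le a c; have h2 := zang_ge1 c; have h3 := Mx_ge1 (zbr R a c).
have h4 := Mx_ge (zbr R a c); have h5 := zbr_ge0 a c.
have h6 : zabs R c <= zang R c by rewrite /zang le_max lexx.
rewrite /zang ge_max; apply/andP; split; rewrite -/(zang R c); nra.
Qed.

Lemma mbound1 a b c :
  Num.min (zang R a) (zang R b) <= 2 * Num.min (zang R c) (zang R b) * Mx (zbr R a c).
Proof.
have h1 := zang_le a c; have h3 := Mx_ge1 (zbr R a c); have hb := zang_ge1 b.
have hc := zang_ge1 c.
have [hcb|hbc] := leP (zang R c) (zang R b).
  by rewrite ge_min h1.
by rewrite ge_min; apply/orP; right; nra.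
Qed.

Lemma mbound2 a b c :
  Num.min (zang R a) (zang R b) <= 2 * Num.min (zang R c) (zang R b) * Mx (zbr R c b).
Proof.
have h1 := zang_le b c; rewrite zbr_sym in h1.
have h3 := Mx_ge1 (zbr R c b); have hb := zang_ge1 b.
have hc := zang_ge1 c.
have [hcb|hbc] := leP (zang R c) (zang R b).
  by rewrite ge_min h1 orbT.
by rewrite ge_min; apply/orP; right; nra.
Qed.

Lemma powle (r x y : R) : 0 <= r -> 0 <= x -> x <= y -> x `^ r <= y `^ r.
Proof.
move=> r0 x0 xy; apply: (ge0_ler_powR r0) => //; rewrite nnegrE //.
exact: le_trans xy.
Qed.

Lemma halfQ (g2 k X Y mu m Mt : R) : 0 <= k -> k <= g2 -> 1 <= X -> 1 <= Y ->
  0 <= mu -> 0 <= m -> 0 <= Mt -> Mt <= 2 * Y -> m <= 2 * mu * X ->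
  Mt `^ g2 * m `^ k <= 2 `^ (g2 + k) * (X `^ g2 * Y `^ g2 * mu `^ k).
Proof.
move=> k0 kg X1 Y1 mu0 m0 Mt0 hMt hm.
have g0 : 0 <= g2 by apply: le_trans kg.
have X0 : 0 <= X by apply: le_trans ler01 X1.
have Y0 : 0 <= Y by apply: le_trans ler01 Y1.
have h1 : Mt `^ g2 <= 2 `^ g2 * Y `^ g2.
  by rewrite -powRM //; apply: powle.
have h2 : m `^ k <= 2 `^ k * mu `^ k * X `^ k.
  by rewrite -!powRM ?mulr_ge0 //; apply: powle.
have h3 : X `^ k <= X `^ g2 by apply: ler_powR.
rewrite powRD; last by rewrite pnatr_eq0 implybT.
have p1 := powR_ge0 2 g2; have p2 := powR_ge0 2 k; have p3 := powR_ge0 mu k.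
have p4 := powR_ge0 X k; have p5 := powR_ge0 Y g2; have p6 := powR_ge0 Mt g2.
have p7 := powR_ge0 m k; have p8 := powR_ge0 X g2.
have h4 : 2 `^ k * mu `^ k * X `^ k <= 2 `^ k * mu `^ k * X `^ g2.
  by apply: ler_wpM2l => //; rewrite mulr_ge0.
have := ler_pM p6 p7 h1 (le_trans h2 h4).
move=> h; apply: le_trans h _; rewrite le_eqVlt; apply/orP; left; apply/eqP; ring.
Qed.

Lemma combine (K C T e e1 e2 P q p1 p2 r : R) :
  0 <= K -> 0 <= C -> 0 <= e -> 0 <= P -> 0 <= q -> 0 <= e1 -> 0 <= e2 ->
  0 <= p1 -> 0 <= p2 -> 0 <= r -> 0 <= T ->
  e <= e1 * e2 -> P * q <= T * (p1 * p2 * r) -> K * T <= C ->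
  K * (C * e * P * q) <= (C * e1 * p1 * 1) * (C * e2 * p2 * r).
Proof.
move=> K0 C0 e0 P0 q0 e10 e20 p10 p20 r0 T0 he hP hK.
have s1 : e * (P * q) <= (e1 * e2) * (T * (p1 * p2 * r)).
  by apply: ler_pM => //; rewrite mulr_ge0.
have s2 : (K * T) * (C * (e1 * e2 * (p1 * p2 * r))) <= C * (C * (e1 * e2 * (p1 * p2 * r))).
  by apply: ler_wpM2r => //; rewrite !mulr_ge0.
have s3 : (K * C) * (e * (P * q)) <= (K * C) * ((e1 * e2) * (T * (p1 * p2 * r))).
  by apply: ler_wpM2l => //; rewrite mulr_ge0.
have E1 : K * (C * e * P * q) = (K * C) * (e * (P * q)) by ring.
have E2 : (K * C) * ((e1 * e2) * (T * (p1 * p2 * r))) =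
          (K * T) * (C * (e1 * e2 * (p1 * p2 * r))) by ring.
have E3 : (C * e1 * p1 * 1) * (C * e2 * p2 * r) = C * (C * (e1 * e2 * (p1 * p2 * r))) by ring.
by rewrite E1 E3; apply: le_trans s3 _; rewrite E2.
Qed.

Lemma Q_ineq (g2 kap : R) a b c : 0 <= kap -> kap <= g2 ->
  Mx (zbr R a b) `^ g2 * Num.min (zang R a) (zang R b) `^ kap <=
  2 `^ (g2 + kap) * (Mx (zbr R a c) `^ g2 * Mx (zbr R c b) `^ g2 *
     Num.min (zang R c) (zang R b) `^ kap).
Proof.
move=> k0 kg.
have t := zbr_tri a b c.
have M1 := Mx_ge1 (zbr R a c); have M2 := Mx_ge1 (zbr R c b).
have t1 := Mx_ge (zbr R a c); have t2 := Mx_ge (zbr R c b).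
have mu0 : 0 <= Num.min (zang R c) (zang R b).
  by rewrite le_min !(le_trans ler01 (zang_ge1 _)).
have m0 : 0 <= Num.min (zang R a) (zang R b).
  by rewrite le_min !(le_trans ler01 (zang_ge1 _)).
have Mt0 : 0 <= Mx (zbr R a b) by apply: le_trans ler01 (Mx_ge1 _).
have [h|h] := lerP (Mx (zbr R a c)) (Mx (zbr R c b)).
  apply: halfQ => //; last exact: mbound1.
  by rewrite [Mx (zbr R a b)]/Mx ge_max; apply/andP; split; lra.
rewrite [X in _ * (X * _)]mulrC.
apply: halfQ => //; last exact: mbound2.
by rewrite [Mx (zbr R a b)]/Mx ge_max; apply/andP; split; lra.
Qed.

Lemma ewt_ineq (C g1 g2 kap K : R) a b c :
  0 <= g1 -> 0 <= kap -> kap <= g2 -> 0 <= K -> K * 2 `^ (g2 + kap) <= C ->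
  K * ewt C g1 g2 kap a b <= ewt C g1 g2 0 a c * ewt C g1 g2 kap c b.
Proof.
move=> g10 k0 kg K0 hC.
have C0 : 0 <= C by apply: le_trans hC; rewrite mulr_ge0 // powR_ge0.
rewrite /ewt powRr0.
apply: (@combine K C (2 `^ (g2 + kap))) => //; rewrite ?expR_ge0 ?powR_ge0 //.
  rewrite -expRD ler_expR -mulrDr; apply: ler_wpM2l => //; exact: zbr_tri.
by have := Q_ineq a b c k0 kg; rewrite /Mx.
Qed.

Lemma ewt_ge1 (C g1 g2 kap : R) a b : 1 <= C -> 0 <= g1 -> 0 <= kap -> 0 <= g2 ->
  1 <= ewt C g1 g2 kap a b.
Proof.
move=> C1 g10 k0 g20; rewrite /ewt.
have e1 : 1 <= expR (g1 * zbr R a b).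
  by rewrite -expR0 ler_expR mulr_ge0 // zbr_ge0.
have ge1M : forall x y : R, 1 <= x -> 1 <= y -> 1 <= x * y.
  by move=> x y hx hy; rewrite -[1]mulr1; apply: ler_pM.
have p1 : 1 <= Num.max (zbr R a b) 1 `^ g2.
  by have := @powle g2 1 (Num.max (zbr R a b) 1) g20 ler01; rewrite powR1 le_max lexx orbT; apply.
have p2 : 1 <= Num.min (zang R a) (zang R b) `^ kap.
  have := @powle kap 1 (Num.min (zang R a) (zang R b)) k0 ler01; rewrite powR1; apply.
  by rewrite le_min !zang_ge1.
by apply: (ge1M) => //; apply: (ge1M) => //; apply: (ge1M).
Qed.
End S_T4.

Section S_T6.
Variable R : realType.

Lemma esum_swap (T : choiceType) (L : set T) (F : T -> T -> \bar R) :
  (forall i j, (0 <= F i j)%E) ->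
  (\esum_(i in L) \esum_(j in L) F i j = \esum_(j in L) \esum_(i in L) F i j)%E.
Proof.
move=> F0; rewrite !esum_esum //.
rewrite (@reindex_esum R _ _ (L `*`` (fun=> L)) (L `*`` (fun=> L)) (fun k => (k.2, k.1))) //.
split.
- by move=> [x y] [/= hx hy].
- by move=> [x y] [x' y'] _ _ /= [-> ->].
- by move=> [x y] [/= hx hy]; exists (y, x).
Qed.
Variable d : nat.
Implicit Types (W : Zd d -> Zd d -> R) (L : set (Zd d)) (X Y Z : blockmx R d).

Definition rowS W L X a := (\esum_(b in L) (opnorm (X a b) * W a b)%:E)%E.
Definition colS W L X b := (\esum_(a in L) (opnorm (X a b) * W a b)%:E)%E.
Definition mnW W L X := Order.max (Order.max 0%E (ereal_sup [set rowS W L X a | a in L]))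
    (ereal_sup [set colS W L X b | b in L]).

Lemma mnormE C g1 g2 kap L X : mnorm C g1 g2 kap L X = mnW (ewt C g1 g2 kap) L X.
Proof. by []. Qed.

Lemma mnW_ge0 W L X : (0 <= mnW W L X)%E.
Proof. by rewrite /mnW !le_max lexx. Qed.

Lemma row_le W L X a : L a -> (rowS W L X a <= mnW W L X)%E.
Proof.
move=> La; rewrite /mnW !le_max; apply/orP; left; apply/orP; right.
by apply: ereal_sup_ubound; exists a.
Qed.

Lemma col_le W L X b : L b -> (colS W L X b <= mnW W L X)%E.
Proof.
move=> Lb; rewrite /mnW !le_max; apply/orP; right.
by apply: ereal_sup_ubound; exists b.
Qed.

Lemma mnW_le W L X (B : \bar R) : (0 <= B)%E ->
  (forall a, L a -> rowS W L X a <= B)%E -> (forall b, L b -> colS W L X b <= B)%E ->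
  (mnW W L X <= B)%E.
Proof.
move=> B0 hr hc; rewrite /mnW !ge_max B0 /=; apply/andP; split.
  by apply: ge_ereal_sup => _ [a La <-]; apply: hr.
by apply: ge_ereal_sup => _ [b Lb <-]; apply: hc.
Qed.

Lemma fin_of (x : \bar R) : (0 <= x)%E -> (x < +oo)%E -> x = (fine x)%:E.
Proof. by case: x. Qed.

Lemma core W WX WY L X Y Z :
  (forall a b, 0 <= W a b) -> (forall a b, 0 <= WX a b) -> (forall a b, 0 <= WY a b) ->
  (mnW WX L X < +oo)%E -> (mnW WY L Y < +oo)%E ->
  (forall a b, L a -> L b -> ((opnorm (Z a b) * W a b)%:E <=
     \esum_(c in L) ((opnorm (X a c) * WX a c) * (opnorm (Y c b) * WY c b))%:E)%E) ->
  (mnW W L Z <= mnW WX L X * mnW WY L Y)%E.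
Proof.
move=> W0 WX0 WY0 hX hY H.
have fX0 : forall a c, 0 <= opnorm (X a c) * WX a c by move=> a c; rewrite mulr_ge0 // opnorm_ge0.
have fY0 : forall a c, 0 <= opnorm (Y a c) * WY a c by move=> a c; rewrite mulr_ge0 // opnorm_ge0.
rewrite (fin_of (mnW_ge0 _ _ _) hX) (fin_of (mnW_ge0 _ _ _) hY).
set x := fine _; set y := fine _.
have fX0' : forall a c, (0 <= (opnorm (X a c) * WX a c)%:E)%E by move=> a c; rewrite lee_fin.
have fY0' : forall a c, (0 <= (opnorm (Y a c) * WY a c)%:E)%E by move=> a c; rewrite lee_fin.
have x0 : 0 <= x by rewrite /x; case: (mnW WX L X) (mnW_ge0 WX L X).
have y0 : 0 <= y by rewrite /y; case: (mnW WY L Y) (mnW_ge0 WY L Y).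
have rX : forall a, L a -> (rowS WX L X a <= x%:E)%E.
  by move=> a La; rewrite -(fin_of (mnW_ge0 _ _ _) hX); apply: row_le.
have cX : forall a, L a -> (colS WX L X a <= x%:E)%E.
  by move=> a La; rewrite -(fin_of (mnW_ge0 _ _ _) hX); apply: col_le.
have rY : forall a, L a -> (rowS WY L Y a <= y%:E)%E.
  by move=> a La; rewrite -(fin_of (mnW_ge0 _ _ _) hY); apply: row_le.
have cY : forall a, L a -> (colS WY L Y a <= y%:E)%E.
  by move=> a La; rewrite -(fin_of (mnW_ge0 _ _ _) hY); apply: col_le.
apply: mnW_le; first by rewrite -EFinM lee_fin mulr_ge0.
- move=> a La; rewrite /rowS.
  apply: le_trans (le_esum (fun b Lb => H a b La Lb)) _.
  rewrite esum_swap; last by move=> i j; rewrite lee_fin mulr_ge0.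
  under eq_esum do under eq_esum do rewrite EFinM.
  under eq_esum => c Lc do rewrite (esumZ _ (fX0 a c) (fY0' c)).
  apply: le_trans (_ : (\esum_(c in L) ((y%:E) * (opnorm (X a c) * WX a c)%:E) <= _)%E).
    apply: le_esum => c Lc; rewrite [leRHS]muleC; apply: lee_wpmul2l => //.
    exact: rY.
  rewrite (esumZ _ y0 (fX0' a)).
  by rewrite muleC; apply: lee_wpmul2r; [rewrite lee_fin | apply: rX].
- move=> b Lb; rewrite /colS.
  apply: le_trans (le_esum (fun a La => H a b La Lb)) _.
  rewrite esum_swap; last by move=> i j; rewrite lee_fin mulr_ge0.
  under eq_esum do under eq_esum do rewrite EFinM muleC.
  under eq_esum => c Lc do rewrite (esumZ _ (fY0 c b) (fun a => fX0' a c)).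
  apply: le_trans (_ : (\esum_(c in L) ((x%:E) * (opnorm (Y c b) * WY c b)%:E) <= _)%E).
    apply: le_esum => c Lc; rewrite [leRHS]muleC; apply: lee_wpmul2l => //.
    exact: cX.
  rewrite (esumZ _ x0 (fun c => fY0' c b)).
  by apply: lee_wpmul2l; [rewrite lee_fin | apply: cY].
Qed.
End S_T6.

Section S_T7.
Variable R : realType.
Variable d : nat.
Implicit Types (W : Zd d -> Zd d -> R) (L : set (Zd d)) (X Y Z : blockmx R d).

Lemma term_le_esum (T : choiceType) (L : set T) (f : T -> \bar R) c :
  L c -> (f c <= \esum_(i in L) f i)%E.
Proof.
move=> Lc; apply: esum_ge; exists [set c]; last by rewrite fsbig_set1.
by split; [exact: finite_set1 | move=> x ->].
Qed.

Lemma ringA (w x y : R) : w * 32 * (8 * x * (8 * y)) = (32 * (8 * 8) * w) * (x * y).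
Proof. ring. Qed.
Lemma ringB (x X y Y : R) : x * X * (y * Y) = (X * Y) * (x * y).
Proof. ring. Qed.

Lemma ringC (k a b : R) : k * (a * b) = k * b * a.
Proof. ring. Qed.

Lemma K0 : 0 <= 32 * (8 * 8) :> R.
Proof. by rewrite -!natrM ler0n. Qed.

Lemma K1 : 0 <= 2 * (8 * 8) :> R.
Proof. by rewrite -!natrM ler0n. Qed.

Lemma opnorm_mul_le (M N : 'M[R[i]]_2) :
  opnorm (M *m N) <= 2 * (8 * 8) * (opnorm M * opnorm N).
Proof.
apply: le_trans (opnorm_le _) _.
have h1 := smxM M N.
have h2 : smx M * smx N <= (8 * opnorm M) * (8 * opnorm N).
  exact: ler_pM (smx_ge0 _) (smx_ge0 _) (smx_le _) (smx_le _).
have h3 : 2 * smx (M *m N) <= 2 * ((8 * opnorm M) * (8 * opnorm N)).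
  apply: ler_wpM2l; [by rewrite ler0n | exact: le_trans h1 h2].
by apply: le_trans h3 _; rewrite mulrACA !mulrA.
Qed.


Lemma ptwise W WX WY L X Y a b :
  (forall a b, 0 <= W a b) -> (forall a b, 0 <= WX a b) -> (forall a b, 0 <= WY a b) ->
  (forall c, (32 * (8 * 8)) * W a b <= WX a c * WY c b) ->
  ((opnorm (mprod L X Y a b) * W a b)%:E <=
     \esum_(c in L) ((opnorm (X a c) * WX a c) * (opnorm (Y c b) * WY c b))%:E)%E.
Proof.
move=> W0 WX0 WY0 hW.
rewrite /mprod EFinM muleC.
apply: le_trans (lee_wpmul2l _ (opnorm_msum _ _)) _; first by rewrite lee_fin.
have w0 : 0 <= W a b * 32 := mulr_ge0 (W0 a b) (ler0n _ 32).
rewrite muleA -EFinM -esumZ; last 2 first.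
- exact: w0.
- by move=> c; rewrite lee_fin smx_ge0.
apply: le_esum => c Lc; rewrite -EFinM lee_fin.
have h1 := smxM (X a c) (Y c b).
have s2 : smx (X a c) * smx (Y c b) <= (8 * opnorm (X a c)) * (8 * opnorm (Y c b)).
  exact: ler_pM (smx_ge0 _) (smx_ge0 _) (smx_le _) (smx_le _).
have s3 := ler_wpM2l w0 (le_trans h1 s2).
apply: le_trans s3 _.
rewrite (ringA (W a b) (opnorm (X a c)) (opnorm (Y c b))).
rewrite (ringB (opnorm (X a c)) (WX a c) (opnorm (Y c b)) (WY c b)).
have hh := ler_wpM2r (mulr_ge0 (opnorm_ge0 (X a c)) (opnorm_ge0 (Y c b))) (hW c).
exact: hh.
Qed.

Lemma absum WX WY L X Y a b :
  (forall a b, 1 <= WX a b) -> (forall a b, 1 <= WY a b) ->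
  (mnW WX L X < +oo)%E -> (mnW WY L Y < +oo)%E -> L a -> L b ->
  abs_summable L (fun c => X a c *m Y c b).
Proof.
move=> WX1 WY1 hX hY La Lb.
have eX := fin_of (mnW_ge0 _ _ _) hX; have eY := fin_of (mnW_ge0 _ _ _) hY.
set x := fine (mnW WX L X) in eX; set y := fine (mnW WY L Y) in eY.
have x0 : 0 <= x by rewrite -lee_fin -eX mnW_ge0.
have y0 : 0 <= y by rewrite -lee_fin -eY mnW_ge0.
have hy : forall c, L c -> opnorm (Y c b) * WY c b <= y.
  move=> c Lc; rewrite -lee_fin -eY; apply: le_trans (col_le _ _ Lb).
  exact: (term_le_esum (fun a => (opnorm (Y a b) * WY a b)%:E) Lc).
rewrite /abs_summable.
apply: (@le_lt_trans _ _ ((2 * (8 * 8) * y)%:E * rowS WX L X a)%E).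
  rewrite -esumZ; last 2 first.
  - by rewrite mulr_ge0 // K1.
  - by move=> c; rewrite lee_fin mulr_ge0 // ?opnorm_ge0 // (le_trans ler01).
  apply: le_esum => c Lc; rewrite -EFinM lee_fin.
  apply: le_trans (opnorm_mul_le _ _) _.
  have := hy c Lc; have := WX1 a c; have := WY1 c b.
  have := opnorm_ge0 (X a c); have := opnorm_ge0 (Y c b).
  set nx := opnorm (X a c); set ny := opnorm (Y c b); move=> ? ? ? ? ?.
  have e1 : ny <= y by nra.
  have e2 : nx * ny <= nx * y by apply: ler_wpM2l.
  have e3 : nx * y <= (nx * WX a c) * y by apply: ler_wpM2r => //; nra.
  have e4 : 2 * (8 * 8) * (nx * ny) <= 2 * (8 * 8) * ((nx * WX a c) * y).
    have hh := ler_wpM2l K1 (le_trans e2 e3); exact: hh.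
  by apply: le_trans e4 _; rewrite (ringC (2 * (8 * 8)) (nx * WX a c) y).
apply: (@le_lt_trans _ _ ((2 * (8 * 8) * y)%:E * x%:E)%E); last by rewrite -EFinM ltry.
apply: lee_wpmul2l; first by rewrite lee_fin mulr_ge0 // K1.
by rewrite -eX; apply: row_le.
Qed.

Lemma ewt_sym (C g1 g2 kap : R) (a b : Zd d) : ewt C g1 g2 kap a b = ewt C g1 g2 kap b a.
Proof. by rewrite /ewt zbr_sym minC. Qed.

End S_T7.

Unset Implicit Arguments.

Theorem proposition2p2 (R : realType) (g2 kap : R) :
  0 <= g2 -> 0 <= kap -> kap <= g2 ->
  exists C0 : R, 1 <= C0 /\
  forall (C : R), C0 <= C ->
  forall (d : nat) (L : set (Zd d)) (g1 : R), (0 < d)%N -> 0 <= g1 ->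
  forall (A B : blockmx R d),
    (mnorm C g1 g2 0 L A < +oo)%E ->
    (mnorm C g1 g2 kap L B < +oo)%E ->
    (forall a b, L a -> L b ->
       abs_summable L (fun c => A a c *m B c b) /\
       abs_summable L (fun c => B a c *m A c b)) /\
    (mnorm C g1 g2 kap L (mprod L A B) < +oo)%E /\
    (mnorm C g1 g2 kap L (mprod L B A) < +oo)%E /\
    (mnorm C g1 g2 kap L (mprod L A B)
       <= mnorm C g1 g2 0 L A * mnorm C g1 g2 kap L B)%E /\
    (mnorm C g1 g2 kap L (mprod L B A)
       <= mnorm C g1 g2 0 L A * mnorm C g1 g2 kap L B)%E.
Proof.
move=> g20 k0 kg.
have p1 : 1 <= 2 `^ (g2 + kap) :> R.
  by rewrite -{1}(powRr0 2); apply: ler_powR; rewrite ?ler1n ?addr_ge0.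
have p2 : 1 <= (32 * (8 * 8)) * 2 `^ (g2 + kap) :> R.
  apply: (le_trans p1); apply: ler_peMl; [exact: (le_trans ler01 p1) | by rewrite -!natrM ler1n].
refine (ex_intro _ (32 * (8 * 8) * 2 `^ (g2 + kap)) _); split; first exact: p2.
move=> C hC d L g1 _ g10 A B hA hB.
have C1 : 1 <= C by apply: le_trans p2 hC.
have W01 := @ewt_ge1 R d C g1 g2 0 _ _ C1 g10 (lexx _) g20.
have Wk1 := @ewt_ge1 R d C g1 g2 kap _ _ C1 g10 k0 g20.
have W00 : forall a b : Zd d, 0 <= ewt C g1 g2 0 a b by move=> a b; have := W01 a b; lra.
have Wk0 : forall a b : Zd d, 0 <= ewt C g1 g2 kap a b by move=> a b; have := Wk1 a b; lra.
have hA' : (mnW (ewt C g1 g2 0) L A < +oo)%E := hA.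
have hB' : (mnW (ewt C g1 g2 kap) L B < +oo)%E := hB.
change ((forall a b : Zd d, L a -> L b ->
       abs_summable L (fun c => A a c *m B c b) /\
       abs_summable L (fun c => B a c *m A c b)) /\
    (mnW (ewt C g1 g2 kap) L (mprod L A B) < +oo)%E /\
    (mnW (ewt C g1 g2 kap) L (mprod L B A) < +oo)%E /\
    (mnW (ewt C g1 g2 kap) L (mprod L A B)
       <= mnW (ewt C g1 g2 0) L A * mnW (ewt C g1 g2 kap) L B)%E /\
    (mnW (ewt C g1 g2 kap) L (mprod L B A)
       <= mnW (ewt C g1 g2 0) L A * mnW (ewt C g1 g2 kap) L B)%E).
clear hA hB.
have iAB : forall a b c : Zd d, (32 * (8 * 8)) * ewt C g1 g2 kap a b <= ewt C g1 g2 0 a c * ewt C g1 g2 kap c b.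
  by move=> a b c; apply: (ewt_ineq a b c g10 k0 kg (@K0 R) hC).
have iBA : forall a b c : Zd d, (32 * (8 * 8)) * ewt C g1 g2 kap a b <= ewt C g1 g2 kap a c * ewt C g1 g2 0 c b.
  move=> a b c; rewrite [ewt _ _ _ kap a b]ewt_sym [ewt _ _ _ kap a c]ewt_sym [ewt _ _ _ 0 c b]ewt_sym [X in _ <= X]mulrC.
  by apply: (ewt_ineq b a c g10 k0 kg (@K0 R) hC).
have cAB : (mnW (ewt C g1 g2 kap) L (mprod L A B) <=
    mnW (ewt C g1 g2 0) L A * mnW (ewt C g1 g2 kap) L B)%E.
  apply: core => // a b La Lb; apply: ptwise => // c.
have cBA : (mnW (ewt C g1 g2 kap) L (mprod L B A) <=
    mnW (ewt C g1 g2 kap) L B * mnW (ewt C g1 g2 0) L A)%E.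
  apply: core => // a b La Lb; apply: ptwise => // c.
rewrite muleC in cBA.
have fin : (mnW (ewt C g1 g2 0) L A * mnW (ewt C g1 g2 kap) L B < +oo)%E.
  by rewrite (fin_of (mnW_ge0 _ _ _) hA') (fin_of (mnW_ge0 _ _ _) hB') -EFinM ltry.
split.
  move=> a b La Lb; split.
  - exact: (absum W01 Wk1).
  - exact: (absum Wk1 W01).
split; first exact: le_lt_trans cAB fin.
split; first exact: le_lt_trans cBA fin.
by split.
Qed.
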